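(* Let $\gamma\in\mathbb{C}$ with $\Re\gamma>0$ and $\Im\gamma<0$, and let $N>|\gamma|/\pi$ be an integer. Then the integral \[ \int_{\mathcal{R}}\frac{e^{(2z-1)x}}{x\sinh(x)\sinh(\gamma x/N)}\,dx \] converges if $-\frac{\Re\gamma}{2N}<\Re z<1+\frac{\Re\gamma}{2N}$.
   Context: $\mathcal{R}:=(-\infty,-1]\cup\{w\in\mathbb{C}:|w|=1,\Im w\ge0\}\cup[1,\infty)$, oriented from $-\infty$ to $\infty$. *)

(* Defs.v *)
From Stdlib Require Import Reals.
From Coquelicot Require Import Coquelicot.
Open Scope R_scope.

Definition Cexp (w : C) : C :=
  (exp (Re w) * cos (Im w), exp (Re w) * sin (Im w)).

Definition Csinh (w : C) : C := ((Cexp w - Cexp (- w)) / 2)%C.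

Definition integrand (gamma z : C) (N : nat) (x : C) : C :=
  (Cexp ((2 * z - 1) * x) / (x * Csinh x * Csinh (gamma * x / RtoC (INR N))))%C.

(* Convergence of the integral along the contour
   R = (-oo,-1] ∪ {|w|=1, Im w >= 0} ∪ [1,+oo), oriented from -oo to +oo:
   - improper Riemann integral over (-oo,-1] converges,
   - the arc integral, parametrized w = e^{i t}, t from PI down to 0,
     dw = i e^{i t} dt, exists,
   - improper Riemann integral over [1,+oo) converges. *)
Definition contour_R_converges (f : C -> C) : Prop :=
  ex_RInt_gen (fun x : R => f (RtoC x)) (Rbar_locally m_infty) (at_point (-1))
  /\ ex_RInt (fun t : R => (f (Cexp (0, t)) * (Ci * Cexp (0, t)))%C) PI 0
  /\ ex_RInt_gen (fun x : R => f (RtoC x)) (at_point 1) (Rbar_locally p_infty).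

(* Main.v *)
Require Import Defs.
From Stdlib Require Import Reals Lra.
From Coquelicot Require Import Coquelicot.
Open Scope R_scope.

Definition CC (f : R -> C) (x : R) :=
  continuous (fun t => fst (f t)) x /\ continuous (fun t => snd (f t)) x.

Lemma CC_cont f x : CC f x -> continuous f x.
Proof.
  intros [H1 H2].
  apply (continuous_ext (fun t => (fst (f t), snd (f t)))).
  { intros t. destruct (f t); reflexivity. }
  apply (continuous_comp_2 (fun t => fst (f t)) (fun t => snd (f t)) (fun a b => (a, b))); auto.
  apply (continuous_ext (fun p => p)). { intros [a b]; reflexivity. }
  apply continuous_id.
Qed.

Lemma cmult (f g : R -> R) (x : R) : continuous f x -> continuous g x -> continuous (fun t => f t * g t) x.
Proof. intros; apply (continuous_mult f g); auto. Qed.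
Lemma cplus (f g : R -> R) (x : R) : continuous f x -> continuous g x -> continuous (fun t => f t + g t) x.
Proof. intros; apply (continuous_plus f g); auto. Qed.
Lemma copp (f : R -> R) (x : R) : continuous f x -> continuous (fun t => - f t) x.
Proof. intros; apply (continuous_opp f); auto. Qed.
Lemma cminus (f g : R -> R) (x : R) : continuous f x -> continuous g x -> continuous (fun t => f t - g t) x.
Proof. intros; apply (continuous_minus f g); auto. Qed.

Lemma CC_const (c : C) x : CC (fun _ => c) x.
Proof. split; apply continuous_const. Qed.

Lemma CC_R (g : R -> R) x : continuous g x -> CC (fun t => RtoC (g t)) x.
Proof. split; simpl; auto. apply continuous_const. Qed.

Lemma CC_pair (g h : R -> R) x : continuous g x -> continuous h x -> CC (fun t => (g t, h t)) x.
Proof. split; simpl; auto. Qed.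

Lemma CC_plus f g x : CC f x -> CC g x -> CC (fun t => f t + g t)%C x.
Proof. intros [] []; split; simpl; apply cplus; auto. Qed.

Lemma CC_opp f x : CC f x -> CC (fun t => - f t)%C x.
Proof. intros []; split; simpl; apply copp; auto. Qed.

Lemma CC_minus f g x : CC f x -> CC g x -> CC (fun t => f t - g t)%C x.
Proof. intros; unfold Cminus; apply CC_plus; auto; apply CC_opp; auto. Qed.

Lemma CC_mult f g x : CC f x -> CC g x -> CC (fun t => f t * g t)%C x.
Proof. intros [] []; split; simpl.
  apply cminus; apply cmult; auto.
  apply cplus; apply cmult; auto. Qed.

Lemma CC_inv f x : CC f x -> f x <> 0%C -> CC (fun t => / f t)%C x.
Proof. intros [H1 H2] Hn.
  assert (Hd : fst (f x) ^ 2 + snd (f x) ^ 2 <> 0).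
  { intro E. apply Hn. destruct (f x) as [a b]; simpl in *.
    assert (a = 0) by nra. assert (b = 0) by nra. subst; reflexivity. }
  assert (Hc : continuous (fun t => fst (f t) ^ 2 + snd (f t) ^ 2) x).
  { apply cplus; simpl; apply cmult; auto; apply cmult; auto; apply continuous_const. }
  split; simpl; unfold Rdiv; apply cmult; auto.
  apply continuous_Rinv_comp; auto.
  apply copp; auto.
  apply continuous_Rinv_comp; auto.
Qed.

Lemma CC_div f g x : CC f x -> CC g x -> g x <> 0%C -> CC (fun t => f t / g t)%C x.
Proof. intros; unfold Cdiv; apply CC_mult; auto; apply CC_inv; auto. Qed.

Lemma CC_exp f x : CC f x -> CC (fun t => Cexp (f t)) x.
Proof. intros [H1 H2]; unfold Cexp; split; simpl; apply cmult.
  apply continuous_exp_comp; auto.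
  apply (continuous_comp (fun t => snd (f t)) cos); auto; apply continuous_cos.
  apply continuous_exp_comp; auto.
  apply (continuous_comp (fun t => snd (f t)) sin); auto; apply continuous_sin.
Qed.

Lemma CC_sinh f x : CC f x -> CC (fun t => Csinh (f t)) x.
Proof. intros H; unfold Csinh. apply CC_div. apply CC_minus; apply CC_exp; auto.
  apply CC_opp; auto. apply CC_const.
  intro E. injection E. lra. Qed.

Lemma Cexp_mod w : Cmod (Cexp w) = exp (fst w).
Proof. unfold Cmod, Cexp, Re, Im; cbn [fst snd].
  replace ((exp (fst w) * cos (snd w)) ^ 2 + ((exp (fst w) * sin (snd w)) ^ 2))
    with ((exp (fst w))^2) by (pose proof (sin2_cos2 (snd w)); unfold Rsqr in *; nra).
  apply sqrt_pow2. apply Rlt_le, exp_pos. Qed.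

Lemma Csinh_eq w : Csinh w = ((exp (fst w) - exp (- fst w))/2 * cos (snd w),
                              (exp (fst w) + exp (- fst w))/2 * sin (snd w)).
Proof. unfold Csinh, Cexp, Cdiv, Cminus; simpl. rewrite cos_neg, sin_neg.
  apply injective_projections; simpl; unfold Re, Im. field. field. Qed.

Lemma Csinh_zero w : Csinh w = 0%C -> fst w = 0 /\ sin (snd w) = 0.
Proof. rewrite Csinh_eq. intro E. injection E as E1 E2.
  pose proof (exp_pos (fst w)). pose proof (exp_pos (- fst w)).
  assert (Hs : sin (snd w) = 0) by nra.
  split; auto.
  assert (Hc : cos (snd w) <> 0).
  { intro Hc. pose proof (sin2_cos2 (snd w)). unfold Rsqr in *. rewrite Hs, Hc in *. lra. }
  assert (Hx : exp (fst w) = exp (- fst w)).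
  { apply Rmult_integral in E1. destruct E1; [lra| contradiction]. }
  apply exp_inv in Hx. lra. Qed.

Lemma Csinh_mod w : Rabs ((exp (fst w) - exp (- fst w))/2) <= Cmod (Csinh w).
Proof. rewrite Csinh_eq. unfold Cmod; simpl.
  rewrite <- sqrt_Rsqr_abs. apply sqrt_le_1_alt.
  set (a := exp (fst w)). set (b := exp (- fst w)).
  assert (Hab : a * b = 1). { unfold a, b. rewrite <- exp_plus. replace (fst w + - fst w) with 0 by ring. apply exp_0. }
  pose proof (sin2_cos2 (snd w)). unfold Rsqr in *.
  set (s := sin (snd w)) in *. set (c := cos (snd w)) in *.
  nra. Qed.

Lemma Csinh_nz' w : fst w <> 0 -> Csinh w <> 0%C.
Proof. intros H E. apply Csinh_zero in E. tauto. Qed.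

Lemma Csinh_nz w : 0 < Cmod w < PI -> Csinh w <> 0%C.
Proof. intros [H1 H2] E. apply Csinh_zero in E. destruct E as [Ha Hs].
  destruct w as [a b]; simpl in *. subst a.
  unfold Cmod in *; cbn [fst snd] in *.
  replace (0 ^ 2 + b ^ 2) with (b²) in * by (unfold Rsqr; ring).
  rewrite sqrt_Rsqr_abs in *.
  destruct (Rle_or_lt 0 b).
  - rewrite Rabs_right in * by lra. assert (0 < sin b) by (apply sin_gt_0; lra). lra.
  - rewrite Rabs_left in * by lra. assert (0 < sin (-b)) by (apply sin_gt_0; lra).
    rewrite sin_neg in *. lra.
Qed.

Lemma exp_small (M c eps : R) : 0 < c -> 0 <= M -> 0 < eps ->
  exists B, forall b, B < b -> M / c * exp (-(c*b)) < eps.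
Proof. intros Hc HM He.
  assert (Hq : 0 < eps * c / (M+1)) by (apply Rdiv_lt_0_compat; nra).
  exists (- ln (eps * c / (M+1)) / c). intros b Hb.
  assert (H1 : exp (-(c*b)) < eps * c / (M+1)).
  { rewrite <- (exp_ln _ Hq). apply exp_increasing.
    apply (Rmult_lt_compat_l c) in Hb; auto. field_simplify in Hb; lra. }
  assert (H2 : M / c * exp (-(c*b)) <= (M+1)/c * exp (-(c*b))).
  { apply Rmult_le_compat_r. apply Rlt_le, exp_pos. unfold Rdiv. apply Rmult_le_compat_r.
    apply Rlt_le, Rinv_0_lt_compat; auto. lra. }
  assert (H3 : (M+1)/c * exp (-(c*b)) < (M+1)/c * (eps * c / (M+1))).
  { apply Rmult_lt_compat_l; auto. apply Rdiv_lt_0_compat; lra. }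
  replace ((M+1)/c * (eps * c / (M+1))) with eps in H3 by (field; lra). lra.
Qed.

Lemma tail_pos (f : R -> C) a M c : 0 < c ->
  (forall x, a <= x -> continuous f x) ->
  (forall x, a <= x -> Cmod (f x) <= M * exp (-(c*x))) ->
  ex_RInt_gen f (at_point a) (Rbar_locally p_infty).
Proof.
  intros Hc Hcont Hb.
  assert (HM : 0 <= M).
  { specialize (Hb a (Rle_refl a)). pose proof (Cmod_ge_0 (f a)).
    pose proof (exp_pos (-(c*a))). nra. }
  assert (Hex : forall b1 b2, a <= b1 -> a <= b2 -> ex_RInt f b1 b2).
  { intros b1 b2 H1 H2. apply (@ex_RInt_continuous C_R_CompleteNormedModule). intros z Hz. apply Hcont.
    destruct Hz as [Hz _]. eapply Rle_trans; [|apply Hz].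
    apply Rmin_glb; auto. }
  assert (Hint : forall b1 b2, a <= b1 <= b2 -> forall l, is_RInt f b1 b2 l ->
             norm l <= M / c * exp (-(c*b1))).
  { intros b1 b2 [H1 H2] l Hl.
    set (F := fun x => -(M/c) * exp (-(c*x))).
    assert (Hg : is_RInt (fun x => M * exp (-(c*x))) b1 b2 (minus (F b2) (F b1))).
    { apply (is_RInt_derive F).
      - intros x _. unfold F. auto_derive; auto. field. lra.
      - intros x _. apply (ex_derive_continuous (fun x => M * exp (-(c*x)))).
        auto_derive; auto. }
    eapply Rle_trans.
    - apply (norm_RInt_le f (fun x => M * exp (-(c*x))) b1 b2 l); eauto.
      intros x Hx. rewrite <- Cmod_norm. apply Hb. lra.
    - unfold F, minus, plus, opp; simpl.
      pose proof (exp_pos (-(c*b2))).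
      assert (0 <= M / c) by (apply Rle_div_r; lra || (unfold Rdiv; apply Rmult_le_pos; [lra| apply Rlt_le, Rinv_0_lt_compat; lra])).
      nra. }
  unfold ex_RInt_gen, is_RInt_gen.
  refine (proj1 (filterlimi_locally_cauchy (U := C_R_CompleteNormedModule) (F := filter_prod (at_point a) (Rbar_locally p_infty))
     (fun ab y => is_RInt f (fst ab) (snd ab) y) _) _).
  - apply (Filter_prod _ _ _ (fun x => x = a) (fun y => a < y)).
    + reflexivity.
    + exists a. auto.
    + intros x y -> Hy. simpl. split.
      * exists (@RInt C_R_CompleteNormedModule f a y). apply (@RInt_correct C_R_CompleteNormedModule), Hex; lra.
      * intros y1 y2 H1 H2. rewrite <- (@is_RInt_unique C_R_CompleteNormedModule _ _ _ _ H1).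
        rewrite <- (@is_RInt_unique C_R_CompleteNormedModule _ _ _ _ H2). reflexivity.
  - intros eps.
    destruct (exp_small M c eps Hc HM (cond_pos eps)) as [B HB].
    exists (fun ab => fst ab = a /\ Rmax a B < snd ab). split.
    + apply (Filter_prod _ _ _ (fun x => x = a) (fun y => Rmax a B < y)).
      * reflexivity.
      * exists (Rmax a B). auto.
      * intros x y -> Hy. simpl. auto.
    + intros [u1 u2] [v1 v2] [Hu1 Hu2] [Hv1 Hv2] u' v' Hu Hv. simpl in *. subst.
      pose proof (Rmax_l a B). pose proof (Rmax_r a B).
      pose proof (is_RInt_Chasles f u2 a v2 _ _ (is_RInt_swap f u2 a u' Hu) Hv) as Huv.
      assert (Hl : Cmod (Cplus (Copp u') v') < eps).
      { rewrite Cmod_norm. destruct (Rle_or_lt u2 v2).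
        * eapply Rle_lt_trans. apply (Hint u2 v2); [lra|exact Huv]. apply HB; lra.
        * rewrite <- norm_opp. eapply Rle_lt_trans.
          apply (Hint v2 u2); [lra|]. apply is_RInt_swap. exact Huv. apply HB; lra. }
      apply (@norm_compat1 R_AbsRing C_R_NormedModule).
      change (norm (V := prod_NormedModule R_AbsRing R_NormedModule R_NormedModule) (Cminus v' u') < eps).
      rewrite <- Cmod_norm.
      replace (Cminus v' u') with (Cplus (Copp u') v'). exact Hl.
      unfold Cminus. rewrite Cplus_comm. reflexivity.
Qed.

Lemma tail_neg (f : R -> C) a M c : 0 < c ->
  (forall x, x <= a -> continuous f x) ->
  (forall x, x <= a -> Cmod (f x) <= M * exp (c*x)) ->
  ex_RInt_gen f (Rbar_locally m_infty) (at_point a).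
Proof.
  intros Hc Hcont Hb.
  assert (HM : 0 <= M).
  { specialize (Hb a (Rle_refl a)). pose proof (Cmod_ge_0 (f a)).
    pose proof (exp_pos (c*a)). nra. }
  assert (Hex : forall b1 b2, b1 <= a -> b2 <= a -> ex_RInt f b1 b2).
  { intros b1 b2 H1 H2. apply (@ex_RInt_continuous C_R_CompleteNormedModule). intros z Hz. apply Hcont.
    destruct Hz as [_ Hz]. eapply Rle_trans; [apply Hz|].
    apply Rmax_lub; auto. }
  assert (Hint : forall b1 b2, b1 <= b2 <= a -> forall l, is_RInt f b1 b2 l ->
             norm l <= M / c * exp (c*b2)).
  { intros b1 b2 [H1 H2] l Hl.
    set (F := fun x => (M/c) * exp (c*x)).
    assert (Hg : is_RInt (fun x => M * exp (c*x)) b1 b2 (minus (F b2) (F b1))).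
    { apply (is_RInt_derive F).
      - intros x _. unfold F. auto_derive; auto. field. lra.
      - intros x _. apply (ex_derive_continuous (fun x => M * exp (c*x))).
        auto_derive; auto. }
    eapply Rle_trans.
    - apply (norm_RInt_le f (fun x => M * exp (c*x)) b1 b2 l); eauto.
      intros x Hx. rewrite <- Cmod_norm. apply Hb. lra.
    - unfold F, minus, plus, opp; simpl.
      pose proof (exp_pos (c*b1)).
      assert (0 <= M / c) by (unfold Rdiv; apply Rmult_le_pos; [lra| apply Rlt_le, Rinv_0_lt_compat; lra]).
      nra. }
  unfold ex_RInt_gen, is_RInt_gen.
  refine (proj1 (filterlimi_locally_cauchy (U := C_R_CompleteNormedModule) (F := filter_prod (Rbar_locally m_infty) (at_point a))
     (fun ab y => is_RInt f (fst ab) (snd ab) y) _) _).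
  - apply (Filter_prod _ _ _ (fun x => x < a) (fun y => y = a)).
    + exists a. auto.
    + reflexivity.
    + intros x y Hx ->. simpl. split.
      * exists (@RInt C_R_CompleteNormedModule f x a). apply (@RInt_correct C_R_CompleteNormedModule), Hex; lra.
      * intros y1 y2 H1 H2. rewrite <- (@is_RInt_unique C_R_CompleteNormedModule _ _ _ _ H1).
        rewrite <- (@is_RInt_unique C_R_CompleteNormedModule _ _ _ _ H2). reflexivity.
  - intros eps.
    destruct (exp_small M c eps Hc HM (cond_pos eps)) as [B0 HB0].
    set (B := - B0).
    assert (HB : forall b, b < B -> M / c * exp (c*b) < eps).
    { intros b Hb'. replace (c*b) with (-(c*(-b))) by ring. apply HB0. unfold B in Hb'. lra. }
    exists (fun ab => Rmin a B > fst ab /\ snd ab = a). split.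
    + apply (Filter_prod _ _ _ (fun x => Rmin a B > x) (fun y => y = a)).
      * exists (Rmin a B). auto.
      * reflexivity.
      * intros x y Hx ->. simpl. auto.
    + intros [u1 u2] [v1 v2] [Hu1 Hu2] [Hv1 Hv2] u' v' Hu Hv. simpl in *. subst.
      pose proof (Rmin_l a B). pose proof (Rmin_r a B).
      pose proof (is_RInt_Chasles f v1 a u1 _ _ Hv (is_RInt_swap f a u1 u' Hu)) as Huv.
      assert (Hl : Cmod (Cplus v' (Copp u')) < eps).
      { rewrite Cmod_norm. destruct (Rle_or_lt v1 u1).
        * eapply Rle_lt_trans. apply (Hint v1 u1); [lra|exact Huv]. apply HB; lra.
        * rewrite <- norm_opp. eapply Rle_lt_trans.
          apply (Hint u1 v1); [lra|]. apply is_RInt_swap. exact Huv. apply HB; lra. }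
      apply (@norm_compat1 R_AbsRing C_R_NormedModule).
      change (norm (V := prod_NormedModule R_AbsRing R_NormedModule R_NormedModule) (Cminus v' u') < eps).
      rewrite <- Cmod_norm. exact Hl.
Qed.

Lemma exp_le' x y : x <= y -> exp x <= exp y.
Proof. intros [H|H]. apply Rlt_le, exp_increasing; auto. subst; lra. Qed.

Lemma sinh_lb r a : 0 < r -> r <= Rabs a ->
  (1 - exp (-(2*r))) / 2 * exp (Rabs a) <= Rabs ((exp a - exp (- a)) / 2).
Proof. intros Hr Ha.
  assert (E : Rabs ((exp a - exp (- a)) / 2) = (exp (Rabs a) - exp (- Rabs a)) / 2).
  { destruct (Rle_or_lt 0 a).
    - rewrite (Rabs_right a) by lra. rewrite Rabs_right; auto.
      assert (exp (-a) <= exp a) by (apply exp_le'; lra). lra.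
    - rewrite (Rabs_left a) by lra. rewrite Rabs_left1. rewrite Ropp_involutive. lra.
      assert (exp a <= exp (-a)) by (apply exp_le'; lra). lra. }
  rewrite E.
  assert (E2 : exp (- Rabs a) = exp (Rabs a) * exp (-(2 * Rabs a))).
  { rewrite <- exp_plus. f_equal. ring. }
  rewrite E2.
  assert (exp (-(2 * Rabs a)) <= exp (-(2*r))) by (apply exp_le'; lra).
  pose proof (exp_pos (Rabs a)). nra.
Qed.

Lemma K_pos r : 0 < r -> 0 < (1 - exp (-(2*r))) / 2.
Proof. intros. assert (exp (-(2*r)) < exp 0) by (apply exp_increasing; lra).
  rewrite exp_0 in H0. lra. Qed.

Lemma Re_lin (w : C) (x : R) : fst (w * RtoC x)%C = fst w * x.
Proof. simpl. ring. Qed.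

Lemma Re_div (w : C) (n : R) : n <> 0 -> fst (w / RtoC n)%C = fst w / n.
Proof. intros. unfold Cdiv, Cmult, Cinv, RtoC; cbn [fst snd]. field. auto. Qed.

Lemma integrand_bound gamma z N x : 0 < Re gamma -> 0 < INR N -> 1 <= Rabs x ->
  Cmod (integrand gamma z N (RtoC x)) <=
    / ((1 - exp (-(2*1))) / 2 * ((1 - exp (-(2*(Re gamma / INR N)))) / 2)) *
    exp ((2 * Re z - 1) * x - (1 + Re gamma / INR N) * Rabs x).
Proof.
  intros Hg Hn Hx.
  set (n := INR N) in *. set (r := Re gamma / n).
  assert (Hr : 0 < r) by (unfold r; apply Rdiv_lt_0_compat; auto).
  set (K1 := (1 - exp (-(2*1))) / 2). set (Kr := (1 - exp (-(2*r))) / 2).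
  assert (HK1 : 0 < K1) by (apply K_pos; lra).
  assert (HKr : 0 < Kr) by (apply K_pos; lra).
  assert (Ew : fst (gamma * RtoC x / RtoC n)%C = r * x).
  { rewrite Re_div by lra. rewrite Re_lin. unfold r, Re. field. lra. }
  assert (E1 : fst ((2 * z - 1) * RtoC x)%C = (2 * Re z - 1) * x).
  { rewrite Re_lin. unfold Re. simpl. ring. }
  assert (Hs1 : K1 * exp (Rabs x) <= Cmod (Csinh (RtoC x))).
  { eapply Rle_trans; [|apply Csinh_mod]. simpl fst. apply sinh_lb; lra. }
  assert (Hs2 : Kr * exp (r * Rabs x) <= Cmod (Csinh (gamma * RtoC x / RtoC n)%C)).
  { eapply Rle_trans; [|apply Csinh_mod]. rewrite Ew.
    replace (r * Rabs x) with (Rabs (r * x)).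
    apply sinh_lb; auto. rewrite Rabs_mult, (Rabs_right r) by lra. nra.
    rewrite Rabs_mult, (Rabs_right r) by lra. reflexivity. }
  assert (Hx0 : RtoC x <> 0%C).
  { intro E. injection E. intro. subst. rewrite Rabs_R0 in Hx. lra. }
  pose proof (exp_pos (Rabs x)). pose proof (exp_pos (r * Rabs x)).
  assert (Hd1 : Csinh (RtoC x) <> 0%C).
  { apply Cmod_gt_0. nra. }
  assert (Hd2 : Csinh (gamma * RtoC x / RtoC n)%C <> 0%C).
  { apply Cmod_gt_0. nra. }
  unfold integrand. fold n.
  rewrite Cmod_div by (apply Cmult_neq_0; [apply Cmult_neq_0|]; auto).
  rewrite !Cmod_mult, Cexp_mod, Cmod_R, E1.
  set (S1 := Cmod (Csinh (RtoC x))) in *.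
  set (S2 := Cmod (Csinh (gamma * RtoC x / RtoC n)%C)) in *.
  set (Ex := (2 * Re z - 1) * x).
  assert (EP : exp (Ex - (1 + r) * Rabs x) * (exp (Rabs x) * exp (r * Rabs x)) = exp Ex).
  { rewrite <- !exp_plus. f_equal. ring. }
  pose proof (exp_pos Ex). pose proof (exp_pos (Ex - (1 + r) * Rabs x)).
  assert (HD : K1 * Kr * (exp (Rabs x) * exp (r * Rabs x)) <= Rabs x * S1 * S2).
  { assert (0 <= K1 * exp (Rabs x)) by nra.
    assert (K1 * exp (Rabs x) * (Kr * exp (r * Rabs x)) <= S1 * S2).
    { apply Rmult_le_compat; nra. }
    assert (S1 * S2 <= Rabs x * S1 * S2).
    { assert (0 < S1) by nra. assert (0 < S2) by nra.
      assert (0 <= S1 * S2) by (apply Rmult_le_pos; lra).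
      replace (Rabs x * S1 * S2) with (Rabs x * (S1 * S2)) by ring. nra. }
    nra. }
  apply (Rle_trans _ (exp Ex / (K1 * Kr * (exp (Rabs x) * exp (r * Rabs x))))).
  - unfold Rdiv. apply Rmult_le_compat_l; [lra|]. apply Rinv_le_contravar; auto.
    apply Rmult_lt_0_compat; nra.
  - rewrite <- EP. right. field. repeat split; lra.
Qed.

Lemma integrand_cont gamma z N x : 0 < Re gamma -> 0 < INR N -> x <> 0 ->
  continuous (fun t : R => integrand gamma z N (RtoC t)) x.
Proof.
  intros Hg Hn Hx. apply CC_cont. unfold integrand.
  assert (Hid : CC (fun t : R => RtoC t) x) by (apply CC_R; apply continuous_id).
  apply (CC_div (fun t => Cexp ((2 * z - 1) * RtoC t)%C)
                (fun t => (RtoC t * Csinh (RtoC t) * Csinh (gamma * RtoC t / RtoC (INR N)))%C)).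
  - apply CC_exp. apply (CC_mult (fun _ => (2 * z - 1)%C) (fun t => RtoC t)); auto. apply CC_const.
  - apply (CC_mult (fun t => (RtoC t * Csinh (RtoC t))%C) (fun t => Csinh (gamma * RtoC t / RtoC (INR N))%C)).
    + apply (CC_mult (fun t => RtoC t) (fun t => Csinh (RtoC t))); auto.
      apply (CC_sinh (fun t => RtoC t)); auto.
    + apply (CC_sinh (fun t => (gamma * RtoC t / RtoC (INR N))%C)).
      apply (CC_div (fun t => (gamma * RtoC t)%C) (fun _ => RtoC (INR N))).
      * apply (CC_mult (fun _ => gamma) (fun t => RtoC t)); auto. apply CC_const.
      * apply CC_const.
      * intro E. injection E. lra.
  - apply Cmult_neq_0; [apply Cmult_neq_0|].
    + intro E. injection E. auto.
    + apply Csinh_nz'. simpl. auto.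
    + apply Csinh_nz'. rewrite Re_div by lra. rewrite Re_lin.
      apply Rmult_integral_contrapositive_currified; [|apply Rinv_neq_0_compat; lra].
      apply Rmult_integral_contrapositive_currified; unfold Re in Hg; lra.
Qed.

Lemma Cexp_it_mod t : Cmod (Cexp (0, t)) = 1.
Proof. rewrite Cexp_mod. simpl. apply exp_0. Qed.

Lemma arc_cont gamma z N t : 0 < Cmod gamma / INR N < PI -> 0 < INR N ->
  continuous (fun t : R => (integrand gamma z N (Cexp (0, t)) * (Ci * Cexp (0, t)))%C) t.
Proof.
  intros Hg Hn. apply CC_cont. unfold integrand.
  assert (Hw : CC (fun t : R => Cexp (0, t)) t).
  { apply (CC_exp (fun t => (0, t))). apply CC_pair. apply continuous_const. apply continuous_id. }
  assert (Hw0 : Cexp (0, t) <> 0%C).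
  { apply Cmod_gt_0. rewrite Cexp_it_mod. lra. }
  apply (CC_mult (fun t => (Cexp ((2 * z - 1) * Cexp (0, t)) / (Cexp (0, t) * Csinh (Cexp (0, t)) * Csinh (gamma * Cexp (0, t) / RtoC (INR N))))%C)
                 (fun t => (Ci * Cexp (0, t))%C)).
  2:{ apply (CC_mult (fun _ => Ci) (fun t => Cexp (0, t))); auto. apply CC_const. }
  apply (CC_div (fun t => Cexp ((2 * z - 1) * Cexp (0, t))%C)
                (fun t => (Cexp (0, t) * Csinh (Cexp (0, t)) * Csinh (gamma * Cexp (0, t) / RtoC (INR N)))%C)).
  - apply (CC_exp (fun t => ((2 * z - 1) * Cexp (0, t))%C)).
    apply (CC_mult (fun _ => (2 * z - 1)%C) (fun t => Cexp (0, t))); auto. apply CC_const.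
  - apply (CC_mult (fun t => (Cexp (0, t) * Csinh (Cexp (0, t)))%C) (fun t => Csinh (gamma * Cexp (0, t) / RtoC (INR N))%C)).
    + apply (CC_mult (fun t => Cexp (0, t)) (fun t => Csinh (Cexp (0, t)))); auto.
      apply (CC_sinh (fun t => Cexp (0, t))); auto.
    + apply (CC_sinh (fun t => (gamma * Cexp (0, t) / RtoC (INR N))%C)).
      apply (CC_div (fun t => (gamma * Cexp (0, t))%C) (fun _ => RtoC (INR N))).
      * apply (CC_mult (fun _ => gamma) (fun t => Cexp (0, t))); auto. apply CC_const.
      * apply CC_const.
      * intro E. injection E. lra.
  - apply Cmult_neq_0; [apply Cmult_neq_0|]; auto.
    + apply Csinh_nz. rewrite Cexp_it_mod. pose proof PI2_1. lra.
    + apply Csinh_nz. rewrite Cmod_div.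
      2:{ intro E. injection E. lra. }
      rewrite Cmod_mult, Cexp_it_mod, Cmod_R, Rabs_right by lra. rewrite Rmult_1_r. auto.
Qed.

Theorem lemma2p1 (gamma : C) (N : nat) (z : C) :
  0 < Re gamma -> Im gamma < 0 ->
  Cmod gamma / PI < INR N ->
  - (Re gamma / (2 * INR N)) < Re z < 1 + Re gamma / (2 * INR N) ->
  contour_R_converges (integrand gamma z N).
Proof.
  intros Hg Hi HN Hz.
  assert (HPI : 0 < PI) by apply PI_RGT_0.
  assert (Hgam : 0 < Cmod gamma).
  { apply Cmod_gt_0. intro E. rewrite E in Hg. simpl in Hg. lra. }
  assert (Hn : 0 < INR N).
  { eapply Rlt_trans; [|apply HN]. apply Rdiv_lt_0_compat; auto. }
  set (n := INR N) in *.
  set (r := Re gamma / n).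
  assert (Hr : 0 < r) by (unfold r; apply Rdiv_lt_0_compat; auto).
  assert (Er : Re gamma / (2 * n) = r / 2) by (unfold r; field; lra).
  rewrite Er in Hz.
  set (M := / ((1 - exp (-(2*1))) / 2 * ((1 - exp (-(2*r))) / 2))).
  assert (Hb : forall x, 1 <= Rabs x -> Cmod (integrand gamma z N (RtoC x)) <=
                  M * exp ((2 * Re z - 1) * x - (1 + r) * Rabs x)).
  { intros x Hx. apply integrand_bound; auto. }
  split; [|split].
  - apply (tail_neg _ (-1) M (2 * Re z + r)). lra.
    + intros x Hx. apply integrand_cont; auto. lra.
    + intros x Hx. eapply Rle_trans. apply Hb. rewrite Rabs_left; lra.
      rewrite Rabs_left by lra. right. f_equal. f_equal. ring.
  - apply (@ex_RInt_continuous C_R_CompleteNormedModule). intros t _.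
    apply arc_cont; auto. split. apply Rdiv_lt_0_compat; auto.
    apply (Rmult_lt_reg_r n); auto. unfold Rdiv. rewrite Rmult_assoc, Rinv_l by lra.
    apply (Rmult_lt_reg_r (/ PI)). apply Rinv_0_lt_compat; auto.
    rewrite Rmult_1_r. replace (PI * n * / PI) with n by (field; lra). exact HN.
  - apply (tail_pos _ 1 M (2 + r - 2 * Re z)). lra.
    + intros x Hx. apply integrand_cont; auto. lra.
    + intros x Hx. eapply Rle_trans. apply Hb. rewrite Rabs_right; lra.
      rewrite Rabs_right by lra. right. f_equal. f_equal. ring.
Qed.
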